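(* Let $d$ be a positive integer, and let $T$ be the rooted tree with root $r$ in which every leaf has depth $d$ and every non-leaf vertex has degree $3$. Let $p\in[0,1]$ and let $S$ be a random subset of $V(T)$ containing each vertex independently with probability $p$. Then $$\mathbf{P}\left[w_{(T,S)}(r)<1\right]\leq\frac{p}{2}+\frac{3}{2}e^{-pd}.$$
   Context: For a graph $G$, a set $S\subseteq V(G)$, and vertices $u,v$ with $u\in S$ or $v\in S$, ${\rm dist}_{(G,S)}(u,v)$ is the minimum number of edges of a path $P$ in $G$ between $u$ and $v$ such that $S$ contains exactly one endvertex of $P$ and no internal vertex of $P$, and $\infty$ if no such path exists (so ${\rm dist}_{(G,S)}(u,u)=0$ for $u\in S$). For $u\in V(G)$, $w_{(G,S)}(u)=\sum_{v\in S}(1/2)^{{\rm dist}_{(G,S)}(u,v)-1}$ with $(1/2)^{\infty}=0$. The depth of a vertex in a rooted tree is its distance from the root. *)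

(* Defs.v *)
From mathcomp Require Import all_boot.
From Stdlib Require Import Reals.
Set Implicit Arguments. Unset Strict Implicit. Unset Printing Implicit Defensive.

Section Dist.
Variables (T : finType) (e : rel T) (S : {set T}).

(* The vertex sequence u :: q is a path of G (consecutive vertices adjacent,
   no repeated vertex) such that S contains exactly one endvertex
   (for q = [::] the only endvertex is u) and no internal vertex. *)
Definition adm_path (u : T) (q : seq T) : bool :=
  [&& path e u q, uniq (u :: q),
      (if q is [::] then u \in S else (u \in S) != (last u q \in S)) &
      all (fun x => x \notin S) (behead (belast u q))].

Definition has_adm_path (u v : T) (k : nat) : bool :=
  [exists t : k.-tuple T, adm_path u t && (last u t == v)].

(* minimum number of edges of such a path; None encodes infinity.
   (A path without repeated vertices has fewer than #|T| edges.) *)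
Definition distGS (u v : T) : option nat :=
  let k := find (has_adm_path u v) (iota 0 #|T|) in
  if (k < #|T|)%nat then Some k else None.

(* w_(G,S)(u) = sum_{v in S} (1/2)^(dist(u,v) - 1), with (1/2)^infinity = 0 *)
Definition wGS (u : T) : R :=
  \big[Rplus/0%R]_(v in S)
     match distGS u v with
     | Some k => powerRZ (/ 2) (Z.of_nat k - 1)
     | None => 0%R
     end.
End Dist.

(* Vertices: the root (None), or Some (i, t) with i < 3 and t a word over {0,1}
   of length k < d; this vertex has depth k+1 and is reached from the root by
   going to child i, then following t.  Root has 3 children, every other vertex
   of depth < d has 2 children, leaves are exactly the vertices of depth d. *)
Definition treeV (d : nat) : finType := option ('I_3 * {k : 'I_d & k.-tuple 'I_2}).

Definition tcode (d : nat) (v : treeV d) : seq nat :=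
  match v with
  | None => [::]
  | Some (i, t) => (i : nat) :: map (@nat_of_ord 2) (tagged t)
  end.

Definition tchild (d : nat) (u v : treeV d) : bool :=
  (size (tcode v) == (size (tcode u)).+1) && (tcode u == take (size (tcode u)) (tcode v)).

Definition tadj (d : nat) : rel (treeV d) := fun u v => tchild u v || tchild v u.

Definition troot (d : nat) : treeV d := None.

Definition probSubset (V : finType) (p : R) (A : {set V}) : R :=
  (p ^ #|A| * (1 - p) ^ (#|V| - #|A|)%nat)%R.

Definition probW_lt1 (d : nat) (p : R) : R :=
  \big[Rplus/0%R]_(S : {set treeV d})
     (if Rlt_dec (wGS (@tadj d) S (troot d)) 1 then probSubset p S else 0%R).

(* Main.v *)
Require Import Defs.
From mathcomp Require Import all_boot.
From Stdlib Require Import Reals.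
From HB Require Import structures.
From Stdlib Require Import Lra Lia.

Lemma RplusA' : associative Rplus. Proof. move=> x y z; lra. Qed.
Lemma RmultA' : associative Rmult. Proof. move=> x y z; ring. Qed.
Lemma Rplus_0_l' : left_id 0%R Rplus. Proof. move=> x; lra. Qed.
Lemma Rmult_1_l' : left_id 1%R Rmult. Proof. move=> x; lra. Qed.
HB.instance Definition _ := Monoid.isComLaw.Build R 0%R Rplus RplusA' Rplus_comm Rplus_0_l'.
HB.instance Definition _ := Monoid.isComLaw.Build R 1%R Rmult RmultA' Rmult_comm Rmult_1_l'.
HB.instance Definition _ := Monoid.isMulLaw.Build R 0%R Rmult Rmult_0_l Rmult_0_r.
HB.instance Definition _ := Monoid.isAddLaw.Build R Rmult Rplus Rmult_plus_distr_r Rmult_plus_distr_l.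

Lemma sum_const (I : finType) (P : pred I) (c : R) :
  \big[Rplus/0%R]_(i | P i) c = (INR #|P| * c)%R.
Proof.
rewrite big_const_seq -size_filter.
have -> : size (filter P (index_enum I)) = #|P|.
  by rewrite cardE /enum_mem size_filter.
elim: #|P| => [|n IH]; first by rewrite /=; lra.
rewrite S_INR /= IH; lra.
Qed.

Lemma prod_const (I : finType) (P : pred I) (c : R) :
  \big[Rmult/1%R]_(i | P i) c = (c ^ #|P|)%R.
Proof.
rewrite big_const_seq -size_filter.
have -> : size (filter P (index_enum I)) = #|P|.
  by rewrite cardE /enum_mem size_filter.
elim: #|P| => /= [|n IH] //. rewrite IH; lra.
Qed.

Lemma ler_sum (I : Type) (r : seq I) (P : pred I) (F G : I -> R) :
  (forall i, P i -> F i <= G i)%R ->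
  (\big[Rplus/0%R]_(i <- r | P i) F i <= \big[Rplus/0%R]_(i <- r | P i) G i)%R.
Proof.
move=> h; apply: (big_ind2 (fun x y => x <= y)%R) => //; first lra.
move=> *; lra.
Qed.

Lemma sum_ge0 (I : Type) (r : seq I) (P : pred I) (F : I -> R) :
  (forall i, P i -> 0 <= F i)%R -> (0 <= \big[Rplus/0%R]_(i <- r | P i) F i)%R.
Proof.
move=> h; apply: (big_ind (fun x => 0 <= x)%R) => //; first lra.
move=> *; lra.
Qed.

Lemma sum_ind (I : finType) (P : pred I) (c : R) :
  \big[Rplus/0%R]_(i : I) (if P i then c else 0%R) = (INR #|P| * c)%R.
Proof. by rewrite -big_mkcond sum_const. Qed.

Lemma probE (V : finType) (p : R) (S : {set V}) :
  probSubset p S = \big[Rmult/1%R]_(v : V) (if v \in S then p else 1 - p)%R.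
Proof.
rewrite (bigID (mem S)) /=.
have h1 : \big[Rmult/1%R]_(i | i \in S) (if i \in S then p else 1 - p)%R = (p ^ #|S|)%R.
  rewrite (eq_bigr (fun _ => p)); last by move=> i ->.
  by rewrite prod_const.
have h2 : \big[Rmult/1%R]_(i | i \notin S) (if i \in S then p else 1 - p)%R
          = ((1 - p) ^ (#|V| - #|S|))%R.
  rewrite (eq_bigr (fun _ => 1 - p)%R); last by move=> i /negbTE ->.
  rewrite prod_const; congr (_ ^ _)%R.
  by rewrite -(cardC S) addKn; apply: eq_card.
by rewrite h1 h2.
Qed.

Lemma prob_disjoint (V : finType) (p : R) (A : {set V}) :
  \big[Rplus/0%R]_(S : {set V})
     (probSubset p S * (if [disjoint A & S] then 1 else 0))%R = ((1 - p) ^ #|A|)%R.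
Proof.
pose g (v : V) (b : bool) := if b then (if v \in A then 0 else p)%R else (1 - p)%R.
rewrite (eq_bigr (fun S : {set V} => \big[Rmult/1%R]_(v : V) g v (v \in S))); last first.
  move=> S _; rewrite probE.
  case: ifP => hd.
    rewrite Rmult_1_r; apply: eq_bigr => v _; rewrite /g.
    case: ifP => // hv; rewrite (disjointFl hd hv) //.
  rewrite Rmult_0_r.
  move/negbT: hd; rewrite disjoint_subset => /subsetPn [v hvA].
  rewrite inE negbK => hvS.
  by rewrite (bigD1 v) //= /g hvS hvA Rmult_0_l.
rewrite (reindex (fun f : {ffun V -> bool} => [set v | f v])); last first.
  exists (fun S : {set V} => [ffun v => v \in S]) => [f _ | S _].
    by apply/ffunP => v; rewrite ffunE inE.
  by apply/setP => v; rewrite inE ffunE.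
rewrite (eq_bigr (fun f : {ffun V -> bool} => \big[Rmult/1%R]_(v : V) g v (f v))); last first.
  by move=> f _; apply: eq_bigr => v _; rewrite inE.
rewrite -(bigA_distr_bigA (fun v b => g v b)).
rewrite (eq_bigr (fun v => if v \in A then 1 - p else 1)%R); last first.
  move=> v _; rewrite big_bool /g; case: (v \in A) => /=; lra.
rewrite -big_mkcond /= prod_const; congr (_ ^ _)%R.
Qed.

Set Implicit Arguments. Unset Strict Implicit.

Definition ancT (d' : nat) (t : d'.-tuple 'I_2) (k : 'I_d'.+1) : k.-tuple 'I_2 :=
  insubd (nseq_tuple k ord0) (take k t).

Definition anc (d' : nat) (x : 'I_3 * d'.-tuple 'I_2) (k : 'I_d'.+1) : treeV d'.+1 :=
  Some (x.1, Tagged (fun k : 'I_d'.+1 => k.-tuple 'I_2) (ancT x.2 k)).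

Lemma tcode_anc d' x k : tcode (@anc d' x k) = (x.1 : nat) :: map val (take k x.2).
Proof.
have -> : tcode (@anc d' x k) = (x.1 : nat) :: map val (val (ancT x.2 k)) by [].
rewrite /ancT val_insubd.
by rewrite size_takel ?eqxx // size_tuple -ltnS.
Qed.

Lemma tcode_inj d : injective (@tcode d).
Proof.
case=> [[i [k t]]|] [[i' [k' t']]|] //=.
case=> /val_inj ei e2.
have ek : k = k' :> nat by move/(congr1 size): e2; rewrite !size_map !size_tuple.
move/val_inj: ek => ek; subst i' k'.
by move/(inj_map val_inj)/val_inj: e2 => ->.
Qed.

Lemma size_tcode_anc d' x k : size (tcode (@anc d' x k)) = (k : nat).+1.
Proof. by rewrite tcode_anc /= size_map size_takel // size_tuple -ltnS. Qed.

Definition apath (d' : nat) (x : 'I_3 * d'.-tuple 'I_2) (j : nat) : treeV d'.+1 :=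
  if j is j'.+1 then anc x (inord j') else troot _.

Lemma tcode_apath d' x j : (j <= d'.+1)%N ->
  tcode (@apath d' x j) = if j is j'.+1 then (x.1 : nat) :: map val (take j' x.2) else [::].
Proof.
case: j => [//|j] hj.
change (tcode (anc x (inord j)) = (x.1 : nat) :: map val (take j x.2)).
by rewrite tcode_anc inordK.
Qed.

Lemma size_tcode_apath d' x j : (j <= d'.+1)%N -> size (tcode (@apath d' x j)) = j.
Proof.
move=> hj; rewrite tcode_apath //; case: j hj => //= j hj.
by rewrite size_map size_takel // size_tuple.
Qed.

Lemma edge_apath d' x j : (j < d'.+1)%N -> tadj (@apath d' x j) (apath x j.+1).
Proof.
move=> hj; apply/orP; left; rewrite /tchild.
rewrite (size_tcode_apath x (ltnW hj)) (size_tcode_apath x hj) eqxx andTb.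
rewrite (tcode_apath x (ltnW hj)) (tcode_apath x hj).
case: j hj => [//|j] hj.
by rewrite /= -map_take take_takel.
Qed.

Lemma path_iota (T : Type) (e : rel T) (f : nat -> T) m n :
  (forall j, (m <= j)%N -> (j < m + n)%N -> e (f j) (f j.+1)) ->
  path e (f m) [seq f j | j <- iota m.+1 n].
Proof.
elim: n m => [//|n IH] m h /=.
apply/andP; split.
  by apply: h; rewrite ?leqnn // addnS ltnS leq_addr.
apply: IH => j h1 h2; apply: h; first exact: ltnW.
by rewrite addnS -addSn.
Qed.

Lemma adm_apath d' (S : {set treeV d'.+1}) x k : (k < d'.+1)%N ->
  troot _ \notin S -> apath x k.+1 \in S ->
  (forall j, (j < k)%N -> apath x j.+1 \notin S) ->
  has_adm_path (@tadj _) S (troot _) (apath x k.+1) k.+1.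
Proof.
move=> hk hr hv hj.
pose q := [seq apath x j | j <- iota 1 k.+1].
have sq : size q == k.+1 by rewrite size_map size_iota.
apply/existsP; exists (Tuple sq).
change (adm_path (@tadj _) S (troot _) q && (last (troot _) q == apath x k.+1)).
have Eq : q = rcons [seq apath x j | j <- iota 1 k] (apath x k.+1).
  rewrite /q; have -> : iota 1 k.+1 = iota 1 k ++ [:: k.+1] by rewrite -(addn1 k) iotaD add1n addn1.
  by rewrite map_cat cats1.
rewrite /adm_path.
have -> : (if q is [::] then troot d'.+1 \in S
           else (troot _ \in S) != (last (troot _) q \in S))
          = ((troot _ \in S) != (last (troot _) q \in S)) by [].
have hpath : path (@tadj _) (troot _) q.
  change (troot d'.+1) with (apath x 0).
  apply: path_iota => j _ h; apply: edge_apath.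
  exact: leq_trans h hk.
have huniq : uniq (troot _ :: q).
  have -> : troot d'.+1 :: q = [seq apath x j | j <- iota 0 k.+2] by [].
  apply: (@map_uniq _ _ (fun v => size (tcode v))).
  rewrite -map_comp.
  suff -> : map ((fun v => size (tcode v)) \o apath x) (iota 0 k.+2) = iota 0 k.+2
    by apply: iota_uniq.
  rewrite -[RHS]map_id; apply/eq_in_map => j.
  rewrite mem_iota add0n => /andP[_ h] /=.
  by apply: size_tcode_apath; apply: leq_trans hk; rewrite -ltnS.
have hall : all (fun v => v \notin S) [seq apath x j | j <- iota 1 k].
  apply/allP => v /mapP [j]; rewrite mem_iota => /andP [h1 h2] ->.
  case: j h1 h2 => [//|j] _ h2; apply: hj.
  by rewrite -ltnS -(addn1 k) addnC.
rewrite hpath huniq Eq last_rcons belast_rcons eqxx (negbTE hr) hv.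
by rewrite [behead _]/= hall.
Qed.

Lemma find_le (T : Type) (a : pred T) s i x0 :
  a (nth x0 s i) -> (find a s <= i)%N.
Proof. by move=> h; rewrite leqNgt; apply/negP => /(before_find x0); rewrite h. Qed.

Lemma dist_le (T : finType) (e : rel T) (S : {set T}) u v n :
  has_adm_path e S u v n -> (n < #|T|)%N ->
  exists2 m, (m <= n)%N & distGS e S u v = Some m.
Proof.
move=> h hn.
have hm : (find (has_adm_path e S u v) (iota 0 #|T|) <= n)%N.
  apply: (@find_le _ _ _ n 0%N); rewrite nth_iota // add0n.
exists (find (has_adm_path e S u v) (iota 0 #|T|)) => //.
rewrite /distGS.
by have -> : (find (has_adm_path e S u v) (iota 0 #|T|) < #|T|)%N
  by apply: leq_ltn_trans hm hn.
Qed.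

Definition term (o : option nat) : R :=
  match o with Some k => powerRZ (/ 2) (Z.of_nat k - 1) | None => 0%R end.

Lemma wGSE (T : finType) (e : rel T) (S : {set T}) u :
  wGS e S u = \big[Rplus/0%R]_(v in S) term (distGS e S u v).
Proof. by []. Qed.

Lemma term_ge0 o : (0 <= term o)%R.
Proof. case: o => [k|] /=; last lra. apply: powerRZ_le; lra. Qed.

Lemma term0 : term (Some 0%N) = 2%R.
Proof. rewrite /term /=. field. Qed.

Lemma pow_le1 (x : R) n : (0 <= x <= 1)%R -> (x ^ n <= 1)%R.
Proof.
move=> hx; elim: n => [|n IH] /=; first lra.
have : (0 <= x ^ n)%R by apply: pow_le; lra.
nra.
Qed.

Lemma term_lb m k : (m <= k.+1)%N -> ((/ 2) ^ k <= term (Some m))%R.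
Proof.
move=> hm.
have h2 : (0 <= / 2 <= 1)%R by split; lra.
case: m hm => [|m] hm.
  rewrite term0; have := pow_le1 k h2; lra.
rewrite /term.
have -> : (Z.of_nat m.+1 - 1)%Z = Z.of_nat m by lia.
rewrite -pow_powerRZ.
have -> : k = (m + (k - m))%N by rewrite subnKC.
rewrite pow_add.
have := pow_le1 (k - m) h2.
have : (0 <= (/ 2) ^ m)%R by apply: pow_le; lra.
nra.
Qed.

Lemma w_ge (T : finType) (e : rel T) (S : {set T}) u v :
  v \in S -> (term (distGS e S u v) <= wGS e S u)%R.
Proof.
move=> hv; rewrite wGSE (bigD1 v) //=.
have := @sum_ge0 _ (index_enum T) (fun i => (i \in S) && (i != v))
  (fun i => term (distGS e S u i)) (fun i _ => term_ge0 _).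
lra.
Qed.

Lemma INR_expn n : INR (expn 2 n) = (2 ^ n)%R.
Proof. elim: n => [//|n IH]; rewrite expnS mulnE mult_INR IH /=; lra. Qed.

Definition hitS d' (S : {set treeV d'.+1}) (x : 'I_3 * d'.-tuple 'I_2) :=
  has (fun j => apath x j.+1 \in S) (iota 0 d'.+1).
Definition kf d' (S : {set treeV d'.+1}) (x : 'I_3 * d'.-tuple 'I_2) :=
  find (fun j => apath x j.+1 \in S) (iota 0 d'.+1).
Definition fh d' (S : {set treeV d'.+1}) (x : 'I_3 * d'.-tuple 'I_2) :=
  apath x (kf S x).+1.

Lemma kf_lt d' S x : @hitS d' S x -> (kf S x < d'.+1)%N.
Proof. by rewrite /hitS has_find size_iota. Qed.

Lemma fh_in d' S x : @hitS d' S x -> fh S x \in S.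
Proof.
move=> h; have := nth_find 0%N h; rewrite nth_iota ?add0n //.
exact: kf_lt h.
Qed.

Lemma before_fh d' S x j : (j < @kf d' S x)%N -> apath x j.+1 \notin S.
Proof.
move=> h; have := before_find 0%N h; rewrite nth_iota ?add0n => [->//|].
apply: leq_trans h _; rewrite /kf.
by have := find_size (fun j => apath x j.+1 \in S) (iota 0 d'.+1); rewrite size_iota.
Qed.

Lemma uniq_apath d' x n : (n <= d'.+2)%N -> uniq [seq @apath d' x j | j <- iota 0 n].
Proof.
move=> hn.
apply: (@map_uniq _ _ (fun v => size (tcode v))).
rewrite -map_comp.
suff -> : map ((fun v => size (tcode v)) \o apath x) (iota 0 n) = iota 0 n
  by apply: iota_uniq.
rewrite -[RHS]map_id; apply/eq_in_map => j.
rewrite mem_iota add0n => /andP[_ h] /=.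
by apply: size_tcode_apath; rewrite -ltnS; apply: leq_trans h hn.
Qed.

Lemma card_tree d' (x : 'I_3 * d'.-tuple 'I_2) : (d'.+2 <= #|treeV d'.+1|)%N.
Proof.
have := uniq_apath x (leqnn d'.+2).
move/card_uniqP; rewrite size_map size_iota => <-.
exact: max_card.
Qed.

Lemma dist_fh d' (S : {set treeV d'.+1}) (x : 'I_3 * d'.-tuple 'I_2) : troot _ \notin S -> @hitS d' S x ->
  ((/ 2) ^ (kf S x) <= term (distGS (@tadj _) S (troot _) (fh S x)))%R.
Proof.
move=> hr h.
have hk := kf_lt h.
have ha := adm_apath hk hr (fh_in h) (@before_fh _ S x).
have hT : ((kf S x).+1 < #|treeV d'.+1|)%N by apply: leq_trans (card_tree x); rewrite ltnS.
have [m hm ->] := dist_le ha hT.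
exact: term_lb.
Qed.

Lemma card_pref d' (i0 : 'I_3) (s : seq 'I_2) k : (k <= d')%N ->
  (#|[pred x : 'I_3 * d'.-tuple 'I_2 | (x.1 == i0) && (take k x.2 == s)]|
     <= expn 2 (d' - k))%N.
Proof.
move=> hk; set A := [pred x : 'I_3 * d'.-tuple 'I_2 | _].
pose g (x : 'I_3 * d'.-tuple 'I_2) : (d' - k).-tuple 'I_2 :=
  insubd (nseq_tuple (d' - k) ord0) (drop k x.2).
have hg : {in A &, injective g}.
  move=> x y /andP[/eqP hx /eqP tx] /andP[/eqP hy /eqP ty] /(congr1 val).
  rewrite !val_insubd !size_drop !size_tuple eqxx => e.
  case: x y hx tx e hy ty => [x1 x2] [y1 y2] /= -> tx e -> ty; congr pair.
  apply: val_inj; transitivity (take k x2 ++ drop k x2); first by rewrite cat_take_drop.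
  by rewrite tx e -ty cat_take_drop.
rewrite -(card_in_imset hg).
apply: leq_trans (max_card _) _.
by rewrite card_tuple card_ord.
Qed.

Lemma fh_eq d' (S : {set treeV d'.+1}) x y : hitS S x -> hitS S y -> fh S x = fh S y ->
  [/\ kf S x = kf S y, x.1 = y.1 & take (kf S x) x.2 = take (kf S x) y.2].
Proof.
move=> hx hy /(congr1 (@tcode _)); rewrite /fh !tcode_apath ?kf_lt // => -[e1 e2].
have ek : kf S x = kf S y.
  move/(congr1 size): e2; rewrite !size_map !size_takel // size_tuple -ltnS kf_lt //.
split => //; first by apply: val_inj.
by rewrite {2}ek; apply: (inj_map val_inj).
Qed.

Lemma pow_half k m : (2 ^ m * (/ 2) ^ (k + m) = (/ 2) ^ k)%R.
Proof.
rewrite pow_add -Rmult_assoc (Rmult_comm (2 ^ m)) Rmult_assoc -Rpow_mult_distr.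
rewrite Rinv_r; last lra.
by rewrite pow1 Rmult_1_r.
Qed.

Lemma W_le d' (S : {set treeV d'.+1}) : troot _ \notin S ->
  (\big[Rplus/0%R]_(x : 'I_3 * d'.-tuple 'I_2) (if hitS S x then (/ 2) ^ d' else 0)
     <= wGS (@tadj _) S (troot _))%R.
Proof.
move=> hr; set a := ((/ 2) ^ d')%R.
have ha : (0 <= a)%R by apply: pow_le; lra.
rewrite (eq_bigr (fun x => \big[Rplus/0%R]_(v in S)
            (if hitS S x && (v == fh S x) then a else 0%R))); last first.
  move=> x _; case: ifP => hx.
    rewrite (bigD1 (fh S x)) ?fh_in // eqxx big1 /=; first lra.
    by move=> v /andP[_ /negbTE ->].
  by rewrite big1.
rewrite exchange_big wGSE /=.
apply: ler_sum => v hv.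
case: (pickP (fun x => hitS S x && (v == fh S x))) => [x0 /andP[hx0 /eqP ev] | none]; last first.
  rewrite big1; [exact: term_ge0 | by move=> x _; rewrite none].
subst v.
set k := kf S x0.
have hk := kf_lt hx0.
apply: Rle_trans (dist_fh hr hx0).
apply: Rle_trans (_ : \big[Rplus/0%R]_(x : 'I_3 * d'.-tuple 'I_2)
   (if (x.1 == x0.1) && (take k x.2 == take k x0.2) then a else 0%R) <= _)%R.
  apply: ler_sum => x _; case: ifP => [/andP[hx /eqP e]|_]; last by case: ifP; lra.
  have [e1 e2 e3] := fh_eq hx0 hx e.
  rewrite e2 -e3 !eqxx /=; lra.
rewrite sum_ind.
have hc := card_pref x0.1 (take k x0.2) (hk : (k <= d')%N).
apply: Rle_trans (_ : INR (expn 2 (d' - k)) * a <= _)%R.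
  by apply: Rmult_le_compat_r => //; apply: le_INR; apply/leP; exact: hc.
rewrite INR_expn /a -{2}(subnKC (hk : (k <= d')%N)).
by rewrite pow_half; apply: Rle_refl.
Qed.

Definition pset d' (x : 'I_3 * d'.-tuple 'I_2) : {set treeV d'.+1} :=
  [set anc x k | k : 'I_d'.+1].

Lemma hit_disj d' (S : {set treeV d'.+1}) x :
  hitS S x = ~~ [disjoint pset x & S].
Proof.
rewrite disjoint_subset; apply/idP/idP.
  case/hasP => j; rewrite mem_iota => /andP[_ hj] hS.
  apply/subsetPn; exists (anc x (inord j)); first by apply: imset_f.
  by rewrite inE negbK.
case/subsetPn => v /imsetP [k _ ->]; rewrite inE negbK => hS.
apply/hasP; exists (val k); first by rewrite mem_iota ltn_ord.
by rewrite /apath inord_val.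
Qed.

Lemma card_pset d' (x : 'I_3 * d'.-tuple 'I_2) : #|pset x| = d'.+1.
Proof.
rewrite /pset card_imset ?card_ord // => k1 k2 /(congr1 (fun v => size (@tcode _ v))).
by rewrite !size_tcode_anc => -[] /val_inj.
Qed.

Lemma sum_const_full (I : finType) (c : R) :
  \big[Rplus/0%R]_(i : I) c = (INR #|I| * c)%R.
Proof. rewrite (@sum_const I predT). by congr (INR _ * _)%R. Qed.

Lemma card_X d' : INR #|{: 'I_3 * d'.-tuple 'I_2}| = (3 * 2 ^ d')%R.
Proof.
rewrite card_prod card_tuple !card_ord mulnE mult_INR INR_expn /=; lra.
Qed.

Lemma total d' (S : {set treeV d'.+1}) :
  (\big[Rplus/0%R]_(x : 'I_3 * d'.-tuple 'I_2) (if hitS S x then (/ 2) ^ d' else 0)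
   + (/ 2) ^ d' * \big[Rplus/0%R]_(x : 'I_3 * d'.-tuple 'I_2) (if hitS S x then 0 else 1)
   = 3)%R.
Proof.
rewrite big_distrr -big_split /=.
rewrite (eq_bigr (fun _ => (/ 2) ^ d')%R); last by move=> x _; case: ifP => _; lra.
rewrite sum_const_full card_X.
have := pow_half 0 d'; rewrite add0n /=; nra.
Qed.

Lemma probS_ge0 (V : finType) p (S : {set V}) : (0 <= p <= 1)%R -> (0 <= probSubset p S)%R.
Proof. move=> hp; apply: Rmult_le_pos; apply: pow_le; lra. Qed.

Lemma dist_root d' (S : {set treeV d'.+1}) :
  troot _ \in S -> distGS (@tadj _) S (troot _) (troot _) = Some 0%N.
Proof.
move=> hr.
have h : has_adm_path (@tadj _) S (troot d'.+1) (troot _) 0.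
  by apply/existsP; exists [tuple]; rewrite /adm_path /= hr.
have h0 : (0 < #|treeV d'.+1|)%N.
  by apply/card_gt0P; exists (troot _).
by have [[|m] // _ ->] := dist_le h h0.
Qed.

Lemma exp_pow x n : (exp x ^ n = exp (x * INR n))%R.
Proof.
elim: n => [|n IH]; first by rewrite /= Rmult_0_r exp_0.
rewrite S_INR /= IH -exp_plus; congr exp; ring.
Qed.

Unset Implicit Arguments.

Theorem mainTheorem9 (d : nat) (hd : (0 < d)%nat) (p : R)
  (hp0 : (0 <= p)%R) (hp1 : (p <= 1)%R) :
  (probW_lt1 d p <= p / 2 + 3 / 2 * exp (- (p * INR d)))%R.
Proof.
case: d hd => [//|d'] _.
have hp : (0 <= p <= 1)%R by split.
set a := ((/ 2) ^ d')%R.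
have ha : (0 <= a)%R by apply: pow_le; lra.
pose M (S : {set treeV d'.+1}) :=
  \big[Rplus/0%R]_(x : 'I_3 * d'.-tuple 'I_2) (if hitS S x then 0 else 1)%R.
have hM : forall S, (0 <= M S)%R.
  by move=> S; apply: sum_ge0 => x _; case: ifP => _; lra.
have step1 : (probW_lt1 d'.+1 p <=
   \big[Rplus/0%R]_(S : {set treeV d'.+1}) (probSubset p S * (a / 2 * M S)))%R.
  apply: ler_sum => S _.
  have hP := probS_ge0 S hp.
  case: Rlt_dec => hw; last first.
    apply: Rmult_le_pos => //; apply: Rmult_le_pos => //; lra.
  have hr : troot _ \notin S.
    apply/negP => hr.
    have := w_ge (@tadj _) (troot d'.+1) hr.
    rewrite dist_root // term0; lra.
  have hW := W_le hr.
  have ht := total S.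
  rewrite /=.
  have hgt : (2 < a * M S)%R by rewrite /M /a; lra.
  have : (0 <= probSubset p S * (a * M S - 2))%R by apply: Rmult_le_pos; lra.
  lra.
apply: Rle_trans step1 _.
have step2 : (\big[Rplus/0%R]_(S : {set treeV d'.+1}) (probSubset p S * (a / 2 * M S))
   = 3 / 2 * (1 - p) ^ d'.+1)%R.
  rewrite (eq_bigr (fun S => \big[Rplus/0%R]_(x : 'I_3 * d'.-tuple 'I_2)
        (a / 2 * (probSubset p S * (if [disjoint pset x & S] then 1 else 0))))%R);
    last first.
    move=> S _; rewrite /M big_distrr big_distrr /=; apply: eq_bigr => x _.
    rewrite hit_disj; case: [disjoint pset x & S] => /=; ring.
  rewrite exchange_big /=.
  rewrite (eq_bigr (fun x => a / 2 * (1 - p) ^ d'.+1)%R); last first.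
    by move=> x _; rewrite -big_distrr prob_disjoint card_pset.
  rewrite sum_const_full card_X /a.
  have := pow_half 0 d'; rewrite add0n /= => h.
  set X := ((1 - p) * (1 - p) ^ d')%R.
  have -> : (3 * 2 ^ d' * ((/ 2) ^ d' / 2 * X) = 3 / 2 * X * (2 ^ d' * (/ 2) ^ d'))%R
    by field.
  by rewrite h; ring.
rewrite step2.
have h1 : ((1 - p) ^ d'.+1 <= exp (- (p * INR d'.+1)))%R.
  have -> : (- (p * INR d'.+1) = - p * INR d'.+1)%R by ring.
  rewrite -exp_pow; apply: pow_incr; have := exp_ineq1_le (- p); lra.
lra.
Qed.
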